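(* Let $\mathbf{A}'$ be an $n\times d$ matrix, $k\ge 1$, $\varepsilon\in(0,1)$, and suppose the maximum coverage optimum $\mathbf{OPT}$ of $\mathbf{A}'$ with $k$ subsets satisfies $\mathbf{OPT}\le C_1\, k\log d/\varepsilon^2$ for a constant $C_1$. Then the total number of nonzero entries among small items of $\mathbf{A}'$ is $O(d\log d/\varepsilon^2)$.
   Context: Item $i$ belongs to subset (column) $j$ iff $A'_{ij}\neq 0$. $\mathbf{OPT}$ is the maximum over sets of $k$ columns of the number of rows having a nonzero entry in at least one of those columns. An item (row) is small if it has fewer than $d/k$ nonzero entries. The implied constant in $O(\cdot)$ depends only on $C_1$. *)

(* Defs.v *)
From mathcomp Require Import all_boot all_order all_algebra.
From mathcomp Require Import all_classical all_reals all_analysis.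
Set Implicit Arguments. Unset Strict Implicit. Unset Printing Implicit Defensive.
Import Order.TTheory GRing.Theory Num.Theory.
Local Open Scope ring_scope.

Section Coverage.
Variables (R : numDomainType) (n d : nat).

(* the row/item i belongs to column/subset j iff A i j <> 0 *)
Definition row_support (A : 'M[R]_(n, d)) (i : 'I_n) : {set 'I_d} :=
  [set j | A i j != 0].

Definition coverage (A : 'M[R]_(n, d)) (S : {set 'I_d}) : nat :=
  #|[set i : 'I_n | [exists j in S, A i j != 0]]|.

Definition OPT (A : 'M[R]_(n, d)) (k : nat) : nat :=
  (\max_(S : {set 'I_d} | #|S| <= k) coverage A S)%N.

(* item i is small: fewer than d/k nonzero entries, i.e. nnz * k < d *)
Definition small_item (A : 'M[R]_(n, d)) (k : nat) (i : 'I_n) : bool :=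
  (#|row_support A i| * k < d)%N.

Definition small_nnz (A : 'M[R]_(n, d)) (k : nat) : nat :=
  (\sum_(i | small_item A k i) #|row_support A i|)%N.
End Coverage.

(* Main.v *)
Require Import Defs.
From mathcomp Require Import all_boot all_order all_algebra.
From mathcomp Require Import all_classical all_reals all_analysis.
From mathcomp Require Import zify ring.
Import Order.TTheory GRing.Theory Num.Theory.
Lemma L1 (d s k : nat) : d * (d + s) ^ k >= d ^ k * (d + k * s).
Proof.
elim: k => [|k IH]; first by rewrite !expn0 mul0n addn0 muln1 mul1n.
rewrite !expnS.
have H : d * ((d + s) * (d + s) ^ k) = (d+s) * (d * (d+s)^k) by ring.
rewrite H; apply: (leq_trans _ (leq_mul (leqnn (d+s)) IH)).
set P := d ^ k. nia.
Qed.

Lemma L2 (d s k : nat) : s <= d -> (d - s) ^ k * (d + s) ^ k <= d ^ k * d ^ k.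
Proof.
move=> hs; rewrite -!expnMn; case: k => [|k]; first by [].
rewrite leq_exp2r //; nia.
Qed.

Lemma L3 (d s k : nat) : 0 < d -> 0 < k -> k * s <= d ->
  k * s * d ^ k <= 2 * d * (d ^ k - (d - s) ^ k).
Proof.
move=> d0 k0 hks.
have hs : s <= d by nia.
have h1 := L1 d s k. have h2 := @L2 d s k hs.
have h3 : (d - s) ^ k * (d + k * s) <= d * d ^ k.
  have : (d - s) ^ k * (d ^ k * (d + k * s)) <= (d ^ k) * (d * d ^ k).
    apply: (leq_trans (leq_mul (leqnn _) h1)).
    have -> : (d - s) ^ k * (d * (d + s) ^ k) = d * ((d - s) ^ k * (d + s) ^ k) by ring.
    have -> : d ^ k * (d * d ^ k) = d * (d ^ k * d ^ k) by ring.
    by rewrite leq_mul2l h2 orbT.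
  have -> : (d - s) ^ k * (d ^ k * (d + k * s)) = d ^ k * ((d - s) ^ k * (d + k * s)) by ring.
  by rewrite leq_pmul2l ?expn_gt0 ?d0.
have h4 : (d - s) ^ k <= d ^ k by case: k {k0 h1 h2 h3 hks} => [|k] //; rewrite leq_exp2r // leq_subr.
move: h3 h4; set P := d ^ k; set Q := (d - s) ^ k => h3 h4.
rewrite -(subnK h4) in h3 *; move: h3; move: (P - Q) => D h3.
have a1 : Q * (k * s) <= d * D.
  move: h3; rewrite !mulnDr; lia.
have a2 : k * s * D <= d * D by rewrite leq_mul2r hks orbT.
rewrite addnK mulnDr. nia.
Qed.


Lemma card_set_sum (T : finType) (P : pred T) : #|[set x | P x]| = \sum_x (P x : nat).
Proof.
rewrite -sum1_card big_mkcond /=; apply: eq_bigr => x _; rewrite inE; by case: (P x).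
Qed.

Lemma key (R : numDomainType) n d k (A : 'M[R]_(n, d)) : (0 < k)%N ->
  (k * small_nnz A k <= 2 * d * OPT A k)%N.
Proof.
move=> k0.
case: (posnP d) => [d0|dpos].
  rewrite /small_nnz big1 ?muln0 // => i _.
  apply/eqP; rewrite -leqn0; apply: (leq_trans (max_card _)); by rewrite card_ord d0.
pose Sf (f : {ffun 'I_k -> 'I_d}) := [set f x | x in 'I_k].
have step1 : (\sum_f coverage A (Sf f) <= d ^ k * OPT A k)%N.
  apply: (@leq_trans (\sum_(f : {ffun 'I_k -> 'I_d}) OPT A k)).
    apply: leq_sum => f _; rewrite /OPT; apply: (leq_bigmax_cond (Sf f) (F := coverage A)).
    by apply: (leq_trans (leq_imset_card _ _)); rewrite card_ord.
  by rewrite sum_nat_const card_ffun !card_ord.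
pose cnt i := #|[set f : {ffun 'I_k -> 'I_d} | [exists j in Sf f, A i j != 0%R]]|.
have step2 : \sum_f coverage A (Sf f) = \sum_i cnt i.
  rewrite /coverage /cnt.
  under eq_bigr do rewrite card_set_sum.
  rewrite exchange_big /=; apply: eq_bigr => i _.
  by rewrite card_set_sum.
have step3 : forall i, cnt i = (d ^ k - (d - #|row_support A i|) ^ k)%N.
  move=> i; rewrite /cnt.
  set X := [set f | _].
  have hC := cardsC X.
  have e1 : #|~: X| = #|@ffun_on 'I_k (~: row_support A i)|.
    apply: eq_card => f; rewrite !inE.
    apply/negP/ffun_onP.
      move=> H x; rewrite !inE; apply/negP => Hx; apply: H.
      by apply/existsP; exists (f x); rewrite Hx andbT; apply/imsetP; exists x.
    move=> H /existsP [j /andP [/imsetP [x _ ->] Hj]].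
    by have := H x; rewrite !inE Hj.
  rewrite e1 card_ffun_on card_ffun !card_ord in hC.
  have hC2 := cardsC (row_support A i); rewrite card_ord in hC2.
  have e2 : #|~: row_support A i| = (d - #|row_support A i|)%N by move: hC2; lia.
  rewrite e2 in hC; by rewrite -hC addnK.
have main : (k * small_nnz A k * d ^ k <= 2 * d * (d ^ k * OPT A k))%N.
  apply: (leq_trans _ (leq_mul (leqnn _) step1)).
  rewrite step2 /small_nnz big_distrr /= big_distrl /=.
  apply: (@leq_trans (\sum_(i | small_item A k i) (2 * d * cnt i))).
    apply: leq_sum => i hi; rewrite step3; apply: L3 => //.
    by move: hi; rewrite /small_item mulnC => /ltnW.
  rewrite -big_distrr /= leq_mul2l [X in (_ <= X)%N](bigID (fun i => small_item A k i)) /= leq_addr orbT //.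
have hdk : (0 < d ^ k)%N by rewrite expn_gt0 dpos.
have e : (2 * d * (d ^ k * OPT A k) = 2 * d * OPT A k * d ^ k)%N by ring.
by rewrite e leq_pmul2r in main.
Qed.

Local Open Scope ring_scope.

Theorem lemma9 (R : realType) (C1 : R) (hC1 : 0 < C1) :
  exists C : R, 0 < C /\
  forall (n d k : nat) (eps : R) (A : 'M[R]_(n, d)),
    (1 <= k)%N -> 0 < eps < 1 ->
    ((OPT A k)%:R <= C1 * k%:R * ln d%:R / eps ^+ 2) ->
    (small_nnz A k)%:R <= C * d%:R * ln d%:R / eps ^+ 2.
Proof.
exists (2 * C1); split; first by rewrite mulr_gt0.
move=> n d k eps A k1 _ hO.
have hk := @key _ _ _ _ A k1.
have kpos : (0 : R) < k%:R by rewrite ltr0n.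
rewrite -(ler_pM2l kpos).
have h1 : k%:R * (small_nnz A k)%:R <= 2 * d%:R * (OPT A k)%:R :> R.
  by rewrite -!natrM ler_nat.
apply: (le_trans h1).
have -> : k%:R * (2 * C1 * d%:R * ln d%:R / eps ^+ 2) =
          2 * d%:R * (C1 * k%:R * ln d%:R / eps ^+ 2) :> R by ring.
by rewrite ler_wpM2l // mulr_ge0 // ler0n.
Qed.
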